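(* Let $A$ be an abelian normal subgroup of a finite group $S$, $T=S/A$, $S\cong A\rtimes_\rho T$, and let $\phi$ be an anti-automorphism of $T$ with $\phi^2$ inner; set $L=L(A,\phi)=\{((a,t),(b,\phi(t))): a,b\in A,t\in T\}\le S\times S^{op}$. Then $L\cong(A\times A)\rtimes_{\overline\rho}T$ (via $((a,t),(b,\phi(t)))\mapsto(a,\phi(t)^{-1}b,t)$), where $T$ acts on $A\times A$ by ${}^{\overline t}(a,a')=({}^ta,{}^{\phi(t^{-1})}a')$ and $\overline\rho(t,t')=(\rho(t,t'),{}^{(t't)^{-1}}\rho(t',t))$. The map $((x,t),(y,s))\mapsto s^{-1}\phi(t)$ factors through a bijection $(S\times S^{op})/L\to T$. If $T$ is abelian, then $L$ is normal in $S\times S^{op}$ and the set of cosets $(S\times S^{op})/L$ is a group isomorphic to $T$ via this bijection.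
   Context: For $A\trianglelefteq S$ abelian, $T=S/A$: choose coset representatives $u(t)$, $u(\mathbf 1)=1$; ${}^ta=u(t)au(t)^{-1}$; $\rho(t,t')=u(t)u(t')u(tt')^{-1}\in Z^2(T,A)$; $S\cong A\rtimes_\rho T$ with $(a,t)(a',t')=(a\,{}^ta'\rho(t,t'),tt')$. $S^{op}$ is the opposite group; elements of $S$ are written as pairs $(a,t)$. The twisted semidirect product $(A\times A)\rtimes_{\overline\rho}T$ is defined analogously. *)

(* Defs.v *)
From HB Require Import structures.
From mathcomp Require Import all_boot all_fingroup all_solvable.
Unset Printing Implicit Defensive.
Local Open Scope group_scope.

Definition opg (gT : finGroupType) : Type := gT.
HB.instance Definition _ (gT : finGroupType) := Finite.on (opg gT).

Section Opp.
Variable gT : finGroupType.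
Definition opg_mul (x y : opg gT) : opg gT := (y : gT) * (x : gT).
Definition opg_one : opg gT := (1 : gT).
Definition opg_inv (x : opg gT) : opg gT := (x : gT)^-1.
Lemma opg_mulA : associative opg_mul.
Proof. by move=> x y z; rewrite /opg_mul mulgA. Qed.
Lemma opg_mul1 : left_id opg_one opg_mul.
Proof. by move=> x; rewrite /opg_mul /opg_one mulg1. Qed.
Lemma opg_mulV : left_inverse opg_one opg_inv opg_mul.
Proof. by move=> x; rewrite /opg_mul /opg_inv mulgV. Qed.
End Opp.
HB.instance Definition _ (gT : finGroupType) :=
  Finite_isGroup.Build (opg gT) (@opg_mulA gT) (@opg_mul1 gT) (@opg_mulV gT).

Definition to_op {gT : finGroupType} (x : gT) : opg gT := x.
Definition of_op {gT : finGroupType} (x : opg gT) : gT := x.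

Definition SxSop {gT : finGroupType} (S : {set gT}) : {set gT * opg gT} :=
  [set p | (p.1 \in S) && (of_op p.2 \in S)].

Definition anti_aut {gT : finGroupType} (T : {set gT}) (phi : gT -> gT) : Prop :=
  [/\ {in T &, injective phi}, phi @: T = T
    & {in T &, forall x y, phi (x * y) = phi y * phi x}].

Definition square_inner {gT : finGroupType} (T : {set gT}) (phi : gT -> gT) : Prop :=
  exists2 z, z \in T & {in T, forall t, phi (phi t) = t ^ z}.

Definition coset_reps {gT : finGroupType} (S A : {set gT})
    (u : coset_of A -> gT) : Prop :=
  [/\ u 1 = 1 & {in S / A, forall t, u t \in S /\ coset A (u t) = t}].

Definition tact {gT : finGroupType} {A : {set gT}} (u : coset_of A -> gT)
    (t : coset_of A) (a : gT) : gT := u t * a * (u t)^-1.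

Definition rho {gT : finGroupType} {A : {set gT}} (u : coset_of A -> gT)
    (t t' : coset_of A) : gT := u t * u t' * (u (t * t'))^-1.

(* Twisted semidirect product multiplication on M x T:
   (m,t)(m',t') = (m * ^t m' * r(t,t'), t t') *)
Definition tw_mul {mT tT : finGroupType} (act : tT -> mT -> mT)
    (r : tT -> tT -> mT) (x y : mT * tT) : mT * tT :=
  (x.1 * act x.2 y.1 * r x.2 y.2, x.2 * y.2).

Definition actbar {gT : finGroupType} {A : {set gT}} (u : coset_of A -> gT)
    (phi : coset_of A -> coset_of A) (t : coset_of A) (m : gT * gT) : gT * gT :=
  (tact u t m.1, tact u (phi t^-1) m.2).

Definition rhobar {gT : finGroupType} {A : {set gT}} (u : coset_of A -> gT)
    (phi : coset_of A -> coset_of A) (t t' : coset_of A) : gT * gT :=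
  (rho u t t', tact u (phi (t * t'))^-1 (rho u (phi t') (phi t))).

Definition Lset {gT : finGroupType} (S A : {set gT})
    (phi : coset_of A -> coset_of A) : {set gT * opg gT} :=
  [set p in SxSop S | coset A (of_op p.2) == phi (coset A p.1)].

(* ((a,t),(b,phi t)) |-> (a, ^{phi(t)^-1} b, t), where x = a u(t), y = b u(phi t) *)
Definition Lmap {gT : finGroupType} {A : {set gT}} (u : coset_of A -> gT)
    (phi : coset_of A -> coset_of A) (p : gT * opg gT) : (gT * gT) * coset_of A :=
  let t := coset A p.1 in
  ((p.1 * (u t)^-1, tact u (phi t)^-1 (of_op p.2 * (u (phi t))^-1)), t).

Definition AAT {gT : finGroupType} (S A : {set gT}) : {set (gT * gT) * coset_of A} :=
  [set x | [&& x.1.1 \in A, x.1.2 \in A & x.2 \in S / A]].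

Definition psi {gT : finGroupType} {A : {set gT}}
    (phi : coset_of A -> coset_of A) (p : gT * opg gT) : coset_of A :=
  (coset A (of_op p.2))^-1 * phi (coset A p.1).

(* Main.v *)
Require Import Defs.
From HB Require Import structures.
From mathcomp Require Import all_boot all_fingroup all_solvable.
Local Open Scope group_scope.

Lemma ab_comm {gT : finGroupType} {G : {set gT}} {x y} :
  abelian G -> x \in G -> y \in G -> commute x y.
Proof. by move=> /centsP h hx hy; apply: h. Qed.

Lemma opgM (gT : finGroupType) (x y : opg gT) : of_op (x * y) = of_op y * of_op x.
Proof. by []. Qed.
Lemma opgV (gT : finGroupType) (x : opg gT) : of_op (x^-1) = (of_op x)^-1.
Proof. by []. Qed.
Lemma opg1 (gT : finGroupType) : of_op (1 : opg gT) = 1.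
Proof. by []. Qed.

Lemma conj_comm (gT : finGroupType) (x y : gT) : commute x y -> x ^ y = x.
Proof. by move=> h; rewrite conjgE h mulKg. Qed.

Section Main.
Variables (gT : finGroupType) (S A : {group gT}).
Variables (u : coset_of A -> gT) (phi : coset_of A -> coset_of A).
Hypotheses (nA : A <| S) (abA : abelian A) (hu : coset_reps S A u)
  (hphi : anti_aut (S / A) phi).
Local Notation T := (S / A).
Local Notation c := (coset A).

Lemma nAS {x} : x \in S -> x \in 'N(A).
Proof. by move=> xS; apply: (subsetP (normal_norm nA)). Qed.
Lemma AS {x} : x \in A -> x \in S.
Proof. by move=> xA; apply: (subsetP (normal_sub nA)). Qed.
Lemma cT {x} : x \in S -> c x \in T.
Proof. exact: mem_quotient. Qed.
Lemma cM x y : x \in S -> y \in S -> c (x * y) = c x * c y.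
Proof. by move=> xS yS; rewrite coset_morphM // nAS. Qed.
Lemma cV x : x \in S -> c x^-1 = (c x)^-1.
Proof. by move=> xS; rewrite morphV // nAS. Qed.
Lemma cJ x y : x \in S -> y \in S -> c (x ^ y) = c x ^ c y.
Proof. by move=> xS yS; rewrite morphJ // nAS. Qed.
Lemma uS {t} : t \in T -> u t \in S.
Proof. by case: hu => _ h /h []. Qed.
Lemma uc {t} : t \in T -> c (u t) = t.
Proof. by case: hu => _ h /h []. Qed.
Lemma phiT {t} : t \in T -> phi t \in T.
Proof. by case: hphi => _ e _ tT; rewrite -e; apply: imset_f. Qed.
Lemma phiM t w : t \in T -> w \in T -> phi (t * w) = phi w * phi t.
Proof. by case: hphi => _ _ h; apply: h. Qed.
Lemma phi1 : phi 1 = 1.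
Proof.
have e := @phiM 1 1 (group1 T) (group1 T); rewrite mulg1 in e.
by have := congr1 (mulg (phi 1)^-1) e; rewrite mulKg mulVg.
Qed.
Lemma phiV t : t \in T -> phi t^-1 = (phi t)^-1.
Proof.
move=> tT; have := @phiM _ t (groupVr tT) tT; rewrite mulVg phi1 => e.
by apply/eqP; rewrite eq_sym eq_invg_mul -e.
Qed.
Lemma ceqA {x y} : x \in S -> y \in S -> c x = c y -> x * y^-1 \in A.
Proof.
move=> xS yS e; rewrite -mem_rcoset; apply/rcoset_kercosetP => //; exact: nAS.
Qed.
Lemma conjA a g h : a \in A -> g \in S -> h \in S -> c g = c h -> a ^ g = a ^ h.
Proof.
move=> aA gS hS e; have [z zA ->] := kercoset_rcoset (nAS gS) (nAS hS) e.
by rewrite conjgM [a ^ z]conj_comm //; apply: (ab_comm abA aA zA).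
Qed.
Lemma tactE w a : tact u w a = a ^ (u w)^-1.
Proof. by rewrite /tact conjgE invgK !mulgA. Qed.
Lemma tactA w a : w \in T -> a \in A -> tact u w a \in A.
Proof. by move=> wT aA; rewrite tactE memJ_norm // nAS // groupV uS. Qed.
Lemma tactM w a b : tact u w (a * b) = tact u w a * tact u w b.
Proof. by rewrite !tactE conjMg. Qed.
Lemma tact_comp w1 w2 a : w1 \in T -> w2 \in T -> a \in A ->
  tact u w1 (tact u w2 a) = tact u (w1 * w2) a.
Proof.
move=> w1T w2T aA; rewrite !tactE -conjgM -invMg; apply: conjA => //.
- by rewrite groupV groupM ?uS.
- by rewrite groupV uS ?groupM.
by rewrite cV ?groupM ?uS // cM ?uS // !uc ?groupM // cV ?uS ?groupM // uc ?groupM.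
Qed.
Local Notation L := (Lset S A phi).
Lemma pM1 (p q : gT * opg gT) : (p * q).1 = p.1 * q.1. Proof. by []. Qed.
Lemma pM2 (p q : gT * opg gT) : of_op (p * q).2 = of_op q.2 * of_op p.2.
Proof. by []. Qed.
Lemma pV1 (p : gT * opg gT) : (p^-1).1 = p.1^-1. Proof. by []. Qed.
Lemma pV2 (p : gT * opg gT) : of_op (p^-1).2 = (of_op p.2)^-1. Proof. by []. Qed.

Lemma inL p : (p \in L) =
  [&& p.1 \in S, of_op p.2 \in S & c (of_op p.2) == phi (c p.1)].
Proof. by rewrite !inE andbA. Qed.
Lemma inSS p : (p \in SxSop S) = (p.1 \in S) && (of_op p.2 \in S).
Proof. by rewrite !inE. Qed.

Lemma Lgroup : group_set L.
Proof.
apply/group_setP; split.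
  by rewrite inL /= group1 /= morph1 phi1 eqxx.
move=> p q; rewrite !inL => /and3P[p1 p2 /eqP ep] /and3P[q1 q2 /eqP eq].
by rewrite pM1 pM2 !groupM // cM // cM // ep eq phiM ?cT // eqxx.
Qed.

Lemma Lmap_inj : {in L &, injective (Lmap u phi)}.
Proof.
move=> [x1 y1] [x2 y2]; rewrite !inL /= => /and3P[x1S y1S /eqP e1] /and3P[x2S y2S /eqP e2].
rewrite /Lmap /= => -[h1 h2 ht]; rewrite -ht in h1 h2.
have -> := mulIg _ _ _ h1; rewrite !tactE in h2; move: h2.
move=> /conjg_inj h3; have h4 := mulIg _ _ _ h3.
by move: h4; rewrite /of_op => ->.
Qed.

Lemma Lmap_im : Lmap u phi @: L = AAT S A.
Proof.
apply/setP => z; apply/imsetP/idP.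
- case=> -[x y]; rewrite inL /= => /and3P[xS yS /eqP e] ->.
  rewrite /Lmap /= inE /=.
  have tT := cT xS; have sT := phiT tT.
  rewrite (ceqA xS (uS tT)) ?uc // tactA ?groupV //.
  by rewrite (ceqA yS (uS sT)) ?uc.
case: z => -[a a'] t; rewrite inE /= => /and3P[aA a'A tT].
have sT := phiT tT.
exists (a * u t, to_op (a' ^ u (phi t)^-1 * u (phi t))).
  rewrite inL /= /to_op /of_op; apply/and3P; split.
  - by apply: groupM; [apply: AS | apply: uS].
  - apply: groupM; last exact: uS.
    by apply: groupJ; [apply: AS | apply: uS; rewrite groupV].
  rewrite coset_kerl // uc // coset_kerl ?uc //.
  by rewrite memJ_norm // nAS // uS // groupV.
rewrite /Lmap /= /to_op /of_op coset_kerl // uc // mulgK tactE.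
by rewrite mulgK conjgK.
Qed.

Lemma pairM2 (a b c d : gT) : (a, b) * (c, d) = (a * c, b * d). Proof. by []. Qed.

Lemma Lmap_hom : {in L &, forall p q, Lmap u phi (p * q)
   = tw_mul (actbar u phi) (rhobar u phi) (Lmap u phi p) (Lmap u phi q)}.
Proof.
move=> [x1 y1] [x2 y2]; rewrite !inL /= => /and3P[x1S y1S /eqP e1] /and3P[x2S y2S /eqP e2].
rewrite /Lmap /tw_mul /actbar /rhobar pM1 pM2 /= !pairM2 cM //.
have t1T := cT x1S; have t2T := cT x2S.
have s1T := phiT t1T; have s2T := phiT t2T.
congr ((_, _), _).
  by rewrite /tact /rho !mulgA !mulgKV.
rewrite phiM // phiV //.
set s1 := phi (c x1); set s2 := phi (c x2).
set b1 := of_op y1 * (u s1)^-1; set b2 := of_op y2 * (u s2)^-1.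
have b1A : b1 \in A by apply: ceqA => //; [exact: uS | rewrite uc].
have b2A : b2 \in A by apply: ceqA => //; [exact: uS | rewrite uc].
have rA : rho u s2 s1 \in A.
  apply: coset_idr; first by apply: nAS; rewrite !groupM ?groupV ?uS ?groupM.
  by rewrite !cM ?groupM ?groupV ?uS ?groupM // cV ?uS ?groupM // !uc ?groupM // mulgV.
have -> : of_op y2 * of_op y1 * (u (s2 * s1))^-1 = b2 * tact u s2 b1 * rho u s2 s1.
  by rewrite /b1 /b2 /tact /rho !mulgA !mulgKV.
have wT : (s2 * s1)^-1 \in T by rewrite groupV groupM.
rewrite (tactM _ (b2 * tact u s2 b1)) (tactM _ b2) tact_comp //=.
rewrite tact_comp ?groupV // invMg mulgKV.
congr (_ * _); apply: (ab_comm abA).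
  by apply: tactA b2A; rewrite groupM ?groupV.
exact: tactA (groupVr s1T) b1A.
Qed.

Lemma SSM g h : g \in SxSop S -> h \in SxSop S -> g * h \in SxSop S.
Proof.
rewrite !inSS => /andP[g1 g2] /andP[h1 h2]; rewrite pM1 pM2 !groupM //.
Qed.
Lemma LSS l : l \in L -> l \in SxSop S.
Proof. by rewrite inL inSS => /and3P[-> ->]. Qed.

Lemma psiT g : g \in SxSop S -> psi phi g \in T.
Proof.
rewrite inSS => /andP[g1 g2]; rewrite /psi groupM ?groupV ?cT //.
by rewrite phiT // cT.
Qed.

Lemma psiL g l : g \in SxSop S -> l \in L -> psi phi (g * l) = psi phi g.
Proof.
rewrite inSS inL => /andP[g1 g2] /and3P[l1 l2 /eqP el].
rewrite /psi pM1 pM2 !cM // el invMg phiM ?cT // !mulgA mulgKV //.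
Qed.

Lemma grp_aux (a b p q : coset_of A) : a^-1 * p = b^-1 * q -> b * a^-1 = q * p^-1.
Proof. by move/(congr1 (fun z => b * z * p^-1)); rewrite mulKVg !mulgA mulgK. Qed.

Lemma psi_eq g h : g \in SxSop S -> h \in SxSop S -> psi phi g = psi phi h ->
  g^-1 * h \in L.
Proof.
rewrite !inSS => /andP[g1 g2] /andP[h1 h2] /grp_aux e.
rewrite inL pM1 pM2 pV1 pV2 !groupM ?groupV //=.
rewrite cM ?groupV // cV // cM ?groupV // cV // phiM ?groupV ?cT // phiV ?cT //.
by rewrite e.
Qed.

Lemma psiM g h : abelian T -> g \in SxSop S -> h \in SxSop S ->
  psi phi (g * h) = psi phi g * psi phi h.
Proof.
move=> abT; rewrite !inSS => /andP[g1 g2] /andP[h1 h2].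
rewrite /psi pM1 pM2 !cM // invMg phiM ?cT //.
rewrite -!mulgA; congr (_ * _); rewrite mulgA; apply: (ab_comm abT).
  by rewrite groupM ?groupV ?phiT ?cT.
by rewrite phiT ?cT.
Qed.

Definition LG := Group Lgroup.
Definition Fc (X : {set gT * opg gT}) := psi phi (repr X).

Lemma F_coset g : g \in SxSop S -> Fc (g *: L) = psi phi g.
Proof.
move=> gS; rewrite /Fc.
have := mem_repr g (lcoset_refl LG g : g \in g *: L); case/lcosetP => l lL ->.
exact: psiL.
Qed.

Lemma pJ2 (l g : gT * opg gT) : of_op (l ^ g).2 = of_op l.2 ^ (of_op g.2)^-1.
Proof. by rewrite [RHS]conjgE invgK mulgA. Qed.
Lemma pJ1 (l g : gT * opg gT) : (l ^ g).1 = l.1 ^ g.1.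
Proof. by []. Qed.

Lemma LJ g l : abelian T -> g \in SxSop S -> l \in L -> l ^ g \in L.
Proof.
move=> abT; rewrite inSS !inL => /andP[g1 g2] /and3P[l1 l2 /eqP el].
rewrite pJ1 pJ2 !groupJ ?groupV //= cJ ?groupV // cJ //.
rewrite [c (of_op l.2) ^ _]conj_comm; last by apply: (ab_comm abT); rewrite ?cT ?groupV.
rewrite [c l.1 ^ _]conj_comm; last by apply: (ab_comm abT); rewrite ?cT.
by rewrite el.
Qed.

Lemma F_inj : {in lcosets L (SxSop S) &, injective Fc}.
Proof.
move=> X Y /lcosetsP[g gS ->] /lcosetsP[h hS ->]; rewrite !F_coset // => e.
have hL : h \in g *: (LG : {set _}) by rewrite mem_lcoset; apply: psi_eq.
by rewrite (lcoset_eqP hL).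
Qed.

Lemma F_im : Fc @: lcosets L (SxSop S) = T.
Proof.
apply/setP => t; apply/imsetP/idP.
  by case=> X /lcosetsP[g gS ->] ->; rewrite F_coset //; apply: psiT.
move=> tT.
have gS : ((1, to_op (u t)^-1) : gT * opg gT) \in SxSop S.
  by rewrite inSS /= group1 /of_op /to_op groupV uS.
exists ((1, to_op (u t)^-1) *: L); first by apply/lcosetsP; exists (1, to_op (u t)^-1).
rewrite F_coset // /psi /= /of_op /to_op cV ?uS // uc // invgK morph1 phi1 mulg1 //.
Qed.

Lemma F_norm : abelian T -> L <| SxSop S.
Proof.
move=> abT; apply/normalP; split.
  by apply/subsetP => l /LSS.
move=> g gS; apply/eqP; rewrite eqEcard cardJg leqnn andbT.
apply/subsetP => z; rewrite mem_conjg => zL.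
by rewrite -(conjgKV g z); apply: LJ.
Qed.

Lemma F_mul : abelian T -> {in SxSop S &, forall g h,
    Fc ((g *: L) * (h *: L)) = Fc (g *: L) * Fc (h *: L)}.
Proof.
move=> abT g h gS hS; rewrite !F_coset // /Fc.
have gh : g * h \in (g *: L) * (h *: L).
  by apply: mem_mulg; apply: (lcoset_refl LG).
case/mulsgP: (mem_repr _ gh) => x y /lcosetP[l1 l1L ->] /lcosetP[l2 l2L ->] ->.
rewrite psiM //; try by apply: SSM => //; apply: LSS.
by rewrite !psiL.
Qed.
End Main.

Theorem lemma3p3 (gT : finGroupType) (S A : {group gT})
    (u : coset_of A -> gT) (phi : coset_of A -> coset_of A) :
  A <| S -> abelian A ->
  coset_reps S A u ->
  anti_aut (S / A) phi -> square_inner (S / A) phi ->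
  let L := Lset S A phi in
  [/\ (* L is a subgroup of S x S^op *)
      L \subset SxSop S /\ group_set L,
      (* L is isomorphic to (A x A) x|_{rho bar} T via Lmap *)
      [/\ {in L &, injective (Lmap u phi)},
          Lmap u phi @: L = AAT S A
        & {in L &, forall p q, Lmap u phi (p * q)
             = tw_mul (actbar u phi) (rhobar u phi) (Lmap u phi p) (Lmap u phi q)}]
    & (* psi factors through a bijection F : (S x S^op)/L -> T *)
      exists F : {set gT * opg gT} -> coset_of A,
        [/\ {in SxSop S, forall g, F (g *: L) = psi phi g},
            {in lcosets L (SxSop S) &, injective F},
            F @: lcosets L (SxSop S) = S / A
          & (* if T is abelian, L is normal and F is a group isomorphism *)
            abelian (S / A) ->
              L <| SxSop S /\
              {in SxSop S &, forall g h,
                  F ((g *: L) * (h *: L)) = F (g *: L) * F (h *: L)}]].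
Proof.
move=> nA abA hu hphi _ L; split.
- split; last exact: Lgroup.
  by apply/subsetP => l; apply: LSS.
- split; [exact: Lmap_inj | exact: Lmap_im | exact: Lmap_hom].
exists (Fc gT A phi); split.
- exact: F_coset.
- exact: F_inj.
- exact: (@F_im gT S A u phi nA hu hphi).
move=> abT; split; [exact: F_norm | exact: F_mul].
Qed.
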